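(* Let $L$ be a finite lattice and $\varphi\in M_\infty(L)$. Then the function $U\mapsto B_\varphi(U)$ on $\mathcal L$ is the Möbius extension of $\varphi$.
   Context: $L$ is a finite lattice with meet $\wedge$. $\mathcal L$ is the set of nonempty up-sets of $L$ ordered by $U\preceq V$ iff $U\supseteq V$ (a distributive lattice with meet = union). For $a\in L$, $\langle a\rangle^*=\{x\in L:x\ge a\}$. Completely monotone: all successive differences $\nabla_{a_1,\dots,a_n}\varphi\ge0$, where $\nabla_a\varphi(x)=\varphi(x)-\varphi(x\wedge a)$ iterated. $M_1(L)$: nonnegative monotone functions on $L$; $M_\infty(L)$, $M_\infty(\mathcal L)$: nonnegative completely monotone functions on $L$, resp. on $(\mathcal L,\preceq)$. $\Pi(\Phi)(x)=\Phi(\langle x\rangle^* )$. For $\varphi\in M_1(L)$ and $U\in\mathcal L$, $B_\varphi(U)=\min\{\Phi(U):\Phi\in M_\infty(\mathcal L),\ \Pi(\Phi)=\varphi\}$. For $\varphi\in M_\infty(L)$ with Möbius inverse $f$ ($\varphi(x)=\sum_{y\le x}f(y)$), its Möbius extension is $\Phi(U)=\sum_{V\preceq U}F(V)$ where $F(\langle x\rangle^* )=f(x)$ and $F=0$ on non-principal up-sets. *)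

(* Defs.v *)
From HB Require Import structures.
From mathcomp Require Import all_boot all_order all_algebra.
Set Implicit Arguments. Unset Strict Implicit. Unset Printing Implicit Defensive.
Import Order.TTheory GRing.Theory Num.Theory.
Local Open Scope ring_scope.

Section Defs.
Context {d : Order.disp_t} {L : finLatticeType d} {R : realFieldType}.

Definition is_upset (U : {set L}) : bool :=
  [forall x : L, forall y : L, ((x \in U) && (x <= y)%O) ==> (y \in U)].

Definition in_calL (U : {set L}) : bool := (U != set0) && is_upset U.

Definition principal (a : L) : {set L} := [set x | (a <= x)%O].

(* iterated successive differences w.r.t. a meet operation m:
   succ_diff m f [:: a1; ...; an] = nabla_{a1} (nabla_{a2} ... (nabla_{an} f)),
   where nabla_a g x = g x - g (m x a). *)
Fixpoint succ_diff {T : Type} (m : T -> T -> T) (f : T -> R) (s : seq T) : T -> R :=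
  match s with
  | [::] => f
  | a :: s' => fun x => succ_diff m f s' x - succ_diff m f s' (m x a)
  end.

(* M_infty(L): nonnegative (case s = [::]) completely monotone functions on L *)
Definition M_inf_L (phi : L -> R) : Prop :=
  forall (s : seq L) (x : L), 0 <= succ_diff (@Order.meet _ L) phi s x.

(* M_infty(\mathcal L): the order on \mathcal L is reverse inclusion, whose meet
   is union; functions are represented on {set L}, only values on \mathcal L matter *)
Definition M_inf_calL (Phi : {set L} -> R) : Prop :=
  forall s : seq {set L}, all in_calL s ->
  forall U : {set L}, in_calL U -> 0 <= succ_diff (@setU L) Phi s U.

Definition Pi (Phi : {set L} -> R) : L -> R := fun x => Phi (principal x).

(* b = B_phi(U) = min { Phi(U) : Phi in M_infty(calL), Pi(Phi) = phi }
   (the minimum is attained and equals b) *)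
Definition is_B_value (phi : L -> R) (U : {set L}) (b : R) : Prop :=
  (exists Phi : {set L} -> R, [/\ M_inf_calL Phi, Pi Phi =1 phi & Phi U = b]) /\
  (forall Phi : {set L} -> R, M_inf_calL Phi -> Pi Phi =1 phi -> b <= Phi U).

Definition mobius_F (f : L -> R) (V : {set L}) : R :=
  if [pick x | V == principal x] is Some x then f x else 0.

(* Moebius extension Phi(U) = sum_{V <= U in calL, i.e. V \supseteq U} F(V) *)
Definition mobius_ext (f : L -> R) (U : {set L}) : R :=
  \sum_(V : {set L} | in_calL V && (U \subset V)) mobius_F f V.

End Defs.

(* Main.v *)
Require Import Defs.
From HB Require Import structures.
From mathcomp Require Import all_boot all_order all_algebra.
Import Order.TTheory GRing.Theory Num.Theory.
Local Open Scope ring_scope.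

Section Aux.
Context {d : Order.disp_t} {L : finLatticeType d} {R : realFieldType}.

Lemma principal_inj : injective (@principal d L).
Proof.
move=> x y E.
have hx : x \in principal y by rewrite -E inE.
have hy : y \in principal x by rewrite E inE.
rewrite !inE in hx hy; by apply/le_anti; rewrite hx hy.
Qed.

Lemma principal_calL (x : L) : in_calL (principal x).
Proof.
apply/andP; split.
  by apply/set0Pn; exists x; rewrite inE.
apply/forallP => a; apply/forallP => b; apply/implyP => /andP[].
by rewrite !inE; apply: le_trans.
Qed.

Lemma calLU (U A : {set L}) : in_calL U -> in_calL A -> in_calL (U :|: A).
Proof.
move=> /andP[U0 /forallP uU] /andP[A0 /forallP uA]; apply/andP; split.
  by rewrite setU_eq0 negb_and U0.
apply/forallP => a; apply/forallP => b; apply/implyP => /andP[].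
rewrite !inE => /orP[aU|aA] ab.
  by move: (uU a) => /forallP/(_ b)/implyP ->; rewrite ?aU ?ab.
by move: (uA a) => /forallP/(_ b)/implyP ->; rewrite ?aA ?ab ?orbT.
Qed.

Variable u0 : L.

Definition g (V : {set L}) : L :=
  foldr (@Order.meet _ L) (odflt u0 [pick x in V]) (enum V).

Lemma foldr_char (x0 : L) s z :
  (z <= foldr (@Order.meet _ L) x0 s)%O = (z <= x0)%O && all (fun u => z <= u)%O s.
Proof.
elim: s => [|a s IH] /=; first by rewrite andbT.
by rewrite lexI IH andbCA.
Qed.

Lemma g_char V z : V != set0 -> (z <= g V)%O <-> (forall u, u \in V -> (z <= u)%O).
Proof.
move=> V0; rewrite /g; case: pickP => [x0 x0V|/= none]; last first.
  by case/set0Pn: V0 => y yV; move: (none y); rewrite yV.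
rewrite /= foldr_char; split.
  by move=> /andP[_ /allP H] u uV; apply: H; rewrite mem_enum.
move=> H; rewrite H //; apply/allP => u; rewrite mem_enum; exact: H.
Qed.

Lemma eq_char (a b : L) : (forall z, (z <= a)%O <-> (z <= b)%O) -> a = b.
Proof.
move=> H; apply/le_anti; rewrite (proj1 (H a) (lexx a)) (proj2 (H b) (lexx b)).
by [].
Qed.

Lemma g_U U A : U != set0 -> A != set0 -> g (U :|: A) = Order.meet (g U) (g A).
Proof.
move=> U0 A0; apply: eq_char => z.
have UA0 : U :|: A != set0 by rewrite setU_eq0 negb_and U0.
rewrite lexI; split.
  move=> /(g_char _ _ UA0) H; apply/andP; split.
    by apply/(g_char _ _ U0) => u uV; apply: H; rewrite inE uV.
  by apply/(g_char _ _ A0) => u uV; apply: H; rewrite inE uV orbT.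
move=> /andP[/(g_char _ _ U0) H1 /(g_char _ _ A0) H2]; apply/(g_char _ _ UA0) => u.
rewrite inE => /orP[]; [exact: H1|exact: H2].
Qed.

Lemma mobius_F_sum (f : L -> R) V :
  mobius_F f V = \sum_(y : L) (if V == principal y then f y else 0).
Proof.
rewrite /mobius_F; case: pickP => [x /eqP -> |none].
  rewrite (bigD1 x) //= eqxx big1 ?addr0 // => y yx.
  case: eqP => // /principal_inj E; by rewrite E eqxx in yx.
by rewrite big1 // => y _; rewrite none.
Qed.

Lemma mobius_ext_sum (f : L -> R) U :
  mobius_ext f U = \sum_(y : L | U \subset principal y) f y.
Proof.
rewrite /mobius_ext (eq_bigr _ (fun V _ => mobius_F_sum f V)).
rewrite exchange_big /= [RHS]big_mkcond; apply: eq_bigr => y _.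
rewrite big_mkcond (bigD1 (principal y)) //= eqxx principal_calL /=.
rewrite big1 ?addr0; first by case: ifP.
by move=> V /negbTE ->; case: ifP.
Qed.

End Aux.

Theorem proposition3p7 (d : Order.disp_t) (L : finLatticeType d) (R : realFieldType)
    (phi : L -> R) (f : L -> R) :
  M_inf_L phi ->
  (forall x : L, phi x = \sum_(y : L | (y <= x)%O) f y) ->
  forall U : {set L}, in_calL U -> is_B_value phi U (mobius_ext f U).
Proof.
move=> Hphi Hf U UL.
have U0 : U != set0 by case/andP: UL.
have [u0 _] := set0Pn _ U0.
have sub_char : forall V y, V != set0 ->
    (V \subset principal y) = (y <= g u0 V)%O.
  move=> V y V0; apply/idP/idP.
    move/subsetP => H; apply/(g_char u0 _ _ V0) => u uV.
    by move: (H u uV); rewrite inE.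
  move/(g_char u0 _ _ V0) => H; apply/subsetP => u uV; rewrite inE; exact: H.
have PsiE : forall V, V != set0 -> mobius_ext f V = phi (g u0 V).
  move=> V V0; rewrite mobius_ext_sum Hf; apply: eq_bigl => y.
  exact: sub_char.
have main : forall s, all in_calL s -> forall V, in_calL V ->
    succ_diff (@setU L) (mobius_ext f) s V
    = succ_diff (@Order.meet _ L) phi (map (g u0) s) (g u0 V).
  elim => [|A s IH] /=.
    by move=> _ V /andP[V0 _]; rewrite PsiE.
  move=> /andP[AL sL] V VL.
  rewrite IH // IH //; last exact: calLU.
  rewrite (g_U u0) //; [by case/andP: VL | by case/andP: AL].
have gP : forall x : L, g u0 (principal x) = x.
  move=> x; apply: eq_char => z.
  have P0 : principal x != set0 by case/andP: (principal_calL x).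
  split.
    by move/(g_char u0 _ _ P0) => H; apply: H; rewrite inE.
  by move=> zx; apply/(g_char u0 _ _ P0) => u; rewrite inE; apply: le_trans.
split.
  exists (mobius_ext f); split => //.
    by move=> s sL V VL; rewrite main //; apply: Hphi.
  by move=> x; rewrite /Pi PsiE ?gP //; case/andP: (principal_calL x).
move=> Phi HPhi HPi.
rewrite PsiE // -HPi /Pi.
have := HPhi [:: principal (g u0 U)] _ U UL.
rewrite /= principal_calL => /(_ isT).
have -> : U :|: principal (g u0 U) = principal (g u0 U).
  by apply/setUidPr; rewrite sub_char.
by rewrite subr_ge0.
Qed.
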